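(* For any positive integer $n$, there exists a finite graph $G_n$ such that the canonical semi-ring $R(G_n)=\bigoplus_{m=0}^\infty R(G_n, mK_{G_n})$ is not generated in degree at most $n-1$, i.e. it is not generated as a graded semi-ring over ${\mathbb{Z}}^{\mathrm{trop}}$ by elements of $\bigoplus_{m=0}^{n-1}R(G_n,mK_{G_n})$.
   Context: A finite graph $G$ is connected, loops and multiple edges allowed. A divisor is $D=\sum_{x\in V(G)}D(x)[x]$, $D(x)\in{\mathbb{Z}}$; effective if all $D(x)\ge0$. A rational function is $f:V(G)\to{\mathbb{Z}}$; $\mathrm{ord}_x(f)=\sum_{e=\overline{xy}\in E(G)}(f(y)-f(x))$, $\mathrm{div}(f)=\sum_x\mathrm{ord}_x(f)[x]$. $R(G,D)=\{f: D+\mathrm{div}(f)\ge0\}$. $K_G=\sum_x(\mathrm{val}(x)-2)[x]$. The direct sum $\bigoplus_m R(G,mK_G)$ is a graded semi-ring over ${\mathbb{Z}}^{\mathrm{trop}}=({\mathbb{Z}},\max,+)$ with sum $\max$ in each degree, action $c\odot f=c+f$, product $f\odot g=f+g$ (degrees add). A set $S$ of homogeneous elements generates it if every homogeneous element is a finite tropical sum of ${\mathbb{Z}}^{\mathrm{trop}}$-multiples of tropical products of elements of $S$. *)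

(* Defs.v *)
From HB Require Import structures.
From mathcomp Require Import all_boot all_order all_algebra.
Set Implicit Arguments. Unset Strict Implicit. Unset Printing Implicit Defensive.
Import Order.TTheory GRing.Theory Num.Theory.
Local Open Scope ring_scope.

(* A finite graph (loops and multiple edges allowed): vertices 'I_nv,
   edges given as a list of (unordered) endpoint pairs; a pair (x,x) is a loop,
   repeated pairs are multiple edges. *)
Record graph := Graph { nv : nat; edges : seq ('I_nv * 'I_nv) }.

Definition vertex (G : graph) := 'I_(nv G).

Definition adj (G : graph) : rel (vertex G) :=
  fun x y => has (fun e : vertex G * vertex G =>
                    ((e.1 == x) && (e.2 == y)) || ((e.2 == x) && (e.1 == y)))
                 (edges G).

Definition connected_graph (G : graph) : Prop :=
  (0 < nv G)%N /\ forall x y : vertex G, connect (@adj G) x y.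

(* valence: loops count twice *)
Definition valence (G : graph) (x : vertex G) : nat :=
  \sum_(e <- edges G) ((e.1 == x) + (e.2 == x))%N.

Definition canonical (G : graph) (x : vertex G) : int :=
  (valence x)%:Z - 2.

Definition ratfun (G : graph) := vertex G -> int.

Definition ord (G : graph) (f : ratfun G) (x : vertex G) : int :=
  \sum_(e <- edges G)
     ((if e.1 == x then f e.2 - f x else 0) + (if e.2 == x then f e.1 - f x else 0)).

Definition in_R (G : graph) (D : vertex G -> int) (f : ratfun G) : Prop :=
  forall x, 0 <= D x + ord f x.

Definition in_RmK (G : graph) (m : nat) (f : ratfun G) : Prop :=
  in_R (fun x => m%:Z * canonical x) f.

(* A set S of homogeneous elements: S m f means (m, f) is in S,
   with f in degree m. *)

(* f (in degree m) is a tropical product of elements of S whose degrees add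
   to m (the empty product is the unit 0 in degree 0). *)
Definition trop_monomial (G : graph) (S : nat -> ratfun G -> Prop)
    (m : nat) (f : ratfun G) : Prop :=
  exists (k : nat) (d : 'I_k -> nat) (g : 'I_k -> ratfun G),
    (forall i, S (d i) (g i)) /\ (\sum_(i < k) d i)%N = m /\
    forall x, f x = \sum_(i < k) g i x.

(* S generates the graded semi-ring: every homogeneous element of degree m
   is a finite (nonempty) tropical sum (pointwise max, written out:
   every term is <= f and at each vertex some term attains f) of Z^trop-multiples
   c (+) h of tropical products h of elements of S of degree m. *)
Definition generates (G : graph) (S : nat -> ratfun G -> Prop) : Prop :=
  forall (m : nat) (f : ratfun G), in_RmK m f ->
    exists (N : nat) (c : 'I_N -> int) (h : 'I_N -> ratfun G),
      (forall j, trop_monomial S m (h j)) /\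
      (forall j x, c j + h j x <= f x) /\
      (forall x, exists j : 'I_N, c j + h j x = f x).

Definition low_degree (G : graph) (n : nat) : nat -> ratfun G -> Prop :=
  fun m f => (m < n)%N /\ in_RmK m f.
Arguments low_degree : clear implicits.

(* Main.v *)
Require Import Defs.
From mathcomp Require Import all_boot all_order all_algebra.
From mathcomp Require Import zify.
Import Order.TTheory GRing.Theory Num.Theory.
Local Open Scope ring_scope.

Lemma sum_nseq_int (A : Type) (k : nat) (a : A) (F : A -> int) :
  \sum_(i <- nseq k a) F i = F a *+ k.
Proof. elim: k => [|k IH]; first by rewrite big_nil. by rewrite /= big_cons IH mulrS. Qed.

Definition u0 : 'I_2 := @Ordinal 2 0 isT.
Definition v0 : 'I_2 := @Ordinal 2 1 isT.
Definition Gn (n : nat) : graph := @Graph 2 (nseq (2 * n) (u0, v0)).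

Lemma valence_Gn n (x : vertex (Gn n)) : valence x = (2 * n)%N.
Proof.
rewrite /valence big_nseq /=.
have -> : ((u0 == x) + (v0 == x) = 1)%N.
  by case: x => [[|[|x]] Hx] //=; rewrite /u0 /v0.
by elim: (2 * n)%N => //= k ->; rewrite add1n.
Qed.

Lemma ord_Gn_v n (g : ratfun (Gn n)) :
  ord g (v0 : vertex (Gn n)) = (g u0 - g v0) *+ (2 * n).
Proof. by rewrite /ord sum_nseq_int /= add0r. Qed.

Lemma ord_Gn_u n (g : ratfun (Gn n)) :
  ord g (u0 : vertex (Gn n)) = (g v0 - g u0) *+ (2 * n).
Proof. by rewrite /ord sum_nseq_int /= addr0. Qed.

Lemma part_bound n (m : nat) (g : ratfun (Gn n)) : (0 < n)%N -> (m < n)%N ->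
  in_RmK m g -> (n%:Z - 1) * (g v0 - g u0) <= (n%:Z - 2) * m%:Z.
Proof.
move=> n0 mn /(_ v0).
rewrite ord_Gn_v /canonical valence_Gn -mulr_natr natz.
move: (g v0) (g u0) => a b H.
have Hnt : n%:Z * (a - b) <= m%:Z * (n%:Z - 1) by lia.
move: (a - b) Hnt => t Hnt.
case: m mn Hnt {H} => [|m] mn Hnt; first by nia.
have : t <= m%:Z by nia.
nia.
Qed.

Lemma sum_int_le (k : nat) (P Q : 'I_k -> int) :
  (forall i, P i <= Q i) -> \sum_(i < k) P i <= \sum_(i < k) Q i.
Proof. by move=> H; apply: ler_sum => i _. Qed.

Lemma adjs n : (0 < n)%N -> @adj (Gn n) u0 v0 /\ @adj (Gn n) v0 u0.
Proof. by case: n. Qed.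

Lemma conn n : (0 < n)%N -> connected_graph (Gn n).
Proof.
move=> n0; split=> //.
have [auv avu] := @adjs n n0.
have Hx : forall x : vertex (Gn n), x = u0 \/ x = v0.
  move=> [[|[|x]] Hx]; [left|right|by []]; exact: val_inj.
move=> x y.
case: (Hx x) => ->; case: (Hx y) => ->.
- exact: connect0.
- exact: connect1.
- exact: connect1.
- exact: connect0.
Qed.

Theorem theorem3p6 (n : nat) : (0 < n)%N ->
  exists G : graph, connected_graph G /\ ~ generates (low_degree G n).
Proof.
move=> n0; exists (Gn n); split; first exact: conn.
pose f : ratfun (Gn n) := fun x => if x == v0 then n%:Z - 1 else 0.
have Hx : forall x : vertex (Gn n), x = u0 \/ x = v0.
  move=> [[|[|x]] Hx]; [left|right|by []]; exact: val_inj.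
have fR : in_RmK n f.
  move=> x; rewrite /canonical valence_Gn.
  case: (Hx x) => ->.
  - rewrite ord_Gn_u /f /= -[_ *+ (2*n)]mulr_natr natz; nia.
  - rewrite ord_Gn_v /f /= -[_ *+ (2*n)]mulr_natr natz; nia.
move=> /(_ n f fR) [N [c [h [Hm [Hle Hex]]]]].
have [j Hj] := Hex v0.
have Hju := Hle j u0.
have fu : f u0 = 0 by [].
have fv : f v0 = n%:Z - 1 by rewrite /f eqxx.
rewrite fu in Hju; rewrite fv in Hj.
have [k [d [g [Hg [Hd Hh]]]]] := Hm j.
have Hb : (n%:Z - 1) * (h j v0 - h j u0) <= (n%:Z - 2) * n%:Z.
  have -> : (n%:Z - 2) * n%:Z = \sum_(i < k) (n%:Z - 2) * (d i)%:Z.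
    by rewrite -mulr_sumr -Hd (big_morph Posz PoszD (erefl (Posz 0%N))).
  rewrite !Hh -sumrB mulr_sumr.
  apply: sum_int_le => i.
  have [Hdi Hgi] := Hg i.
  exact: part_bound.
nia.
Qed.
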